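(* In the Setting below, for any index $i$ and any two $C_i$-tests $S,S'\in\mathcal{T}$, either $L(S)\subseteq L(S')$, or $L(S')\subseteq L(S)$, or $L(S)\cap L(S')=\emptyset$.
   Context: A test $T$ on $[n]$ separates $i\neq j$ if $|\{i,j\}\cap T|=1$. The classes induced by a collection $\mathcal{T}'$ of tests are the equivalence classes of the relation ''$i,j$ are not separated by any test of $\mathcal{T}'$''. Setting: $\mathcal{T}$ is a collection of distinct tests on $[n]$ that is a test cover, and $\mathcal{F}\subseteq\mathcal{T}$ has the property that for every $T\in\mathcal{T}\setminus\mathcal{F}$, $\mathcal{F}\cup\{T\}$ induces at most one more class than $\mathcal{F}$, and for every two tests $T,T'\in\mathcal{T}\setminus\mathcal{F}$, $\mathcal{F}\cup\{T,T'\}$ induces at most two more classes than $\mathcal{F}$. Let $C_1,\dots,C_l$ be the classes induced by $\mathcal{F}$. For $C\subseteq[n]$, a test $S\in\mathcal{T}$ is a $C$-test if $S\cap C\neq\emptyset$ and $C\setminus S\neq\emptyset$; its local portion is $L(S)=S\cap C$ and global portion $G(S)=S\setminus C$. It is assumed that every $C_i$-test $S$ satisfies $|S\cap C_i|\le |C_i|/2$ (for each $i$). *)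

(* Defs.v *)
(* Ground set [n] is modelled as 'I_n; tests are {set 'I_n};
   collections of (distinct) tests are {set {set 'I_n}}. *)
From mathcomp Require Import all_boot.
Set Implicit Arguments. Unset Strict Implicit. Unset Printing Implicit Defensive.

Section TestCover.
Variable n : nat.
Implicit Types (T S C : {set 'I_n}) (Ts : {set {set 'I_n}}).

(* T separates i and j: |{i,j} ∩ T| = 1 *)
Definition separates T (i j : 'I_n) : bool := (i \in T) != (j \in T).

Definition unsep Ts (i j : 'I_n) : bool := [forall T in Ts, ~~ separates T i j].

Definition class_of Ts (i : 'I_n) : {set 'I_n} := [set j | unsep Ts i j].

Definition classes Ts : {set {set 'I_n}} := [set class_of Ts i | i : 'I_n].

Definition num_classes Ts : nat := #|classes Ts|.

Definition test_cover Ts : Prop :=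
  forall i j : 'I_n, i != j -> exists2 T, T \in Ts & separates T i j.

Definition is_Ctest C S : bool := (S :&: C != set0) && (C :\: S != set0).

Definition local_portion C S : {set 'I_n} := S :&: C.
Definition global_portion C S : {set 'I_n} := S :\: C.

End TestCover.

(* Main.v *)
Require Import Defs.
From mathcomp Require Import all_boot.
From mathcomp Require Import zify.
Set Implicit Arguments. Unset Strict Implicit. Unset Printing Implicit Defensive.

Section Aux.
Variable n : nat.
Implicit Types (Ts Us : {set {set 'I_n}}) (i j x y : 'I_n) (T : {set 'I_n}).

Lemma unsepP Ts i j :
  reflect (forall T, T \in Ts -> (i \in T) = (j \in T)) (unsep Ts i j).
Proof.
apply: (iffP forall_inP) => H T HT.
  by have := H T HT; rewrite /separates negbK => /eqP.
by rewrite /separates (H T HT) eqxx.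
Qed.

Lemma class_eq Ts i j : unsep Ts i j -> class_of Ts i = class_of Ts j.
Proof.
move/unsepP=> H; apply/setP => k; rewrite !inE.
apply/unsepP/unsepP => H' T HT; first by rewrite -H // H'.
by rewrite H // H'.
Qed.

Lemma class_self Ts i : i \in class_of Ts i.
Proof. by rewrite inE; apply/unsepP. Qed.

Lemma in_class_unsep Ts i x y : x \in class_of Ts i -> y \in class_of Ts i ->
  unsep Ts x y.
Proof.
rewrite !inE => /unsepP Hx /unsepP Hy; apply/unsepP => T HT.
by rewrite -Hx // Hy.
Qed.

Lemma unsep_sub Ts Us i j : Ts \subset Us -> unsep Us i j -> unsep Ts i j.
Proof.
move=> sub /unsepP H; apply/unsepP => T HT; apply: H; exact: (subsetP sub).
Qed.

Lemma class_neq Ts T x y : T \in Ts -> (x \in T) != (y \in T) ->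
  class_of Ts x != class_of Ts y.
Proof.
move=> HT Hs; apply/negP => /eqP E.
have : y \in class_of Ts x by rewrite E class_self.
rewrite inE => /unsepP H; by rewrite H // eqxx in Hs.
Qed.

End Aux.

Theorem mainTheorem10 (n : nat) (Tt F : {set {set 'I_n}}) :
  test_cover Tt ->
  F \subset Tt ->
  (forall T, T \in Tt :\: F -> num_classes (T |: F) <= (num_classes F).+1) ->
  (forall T T', T \in Tt :\: F -> T' \in Tt :\: F ->
     num_classes (T |: (T' |: F)) <= (num_classes F).+2) ->
  (forall C, C \in classes F -> forall S, S \in Tt -> is_Ctest C S ->
     2 * #|local_portion C S| <= #|C|) ->
  forall C, C \in classes F ->
  forall S S', S \in Tt -> S' \in Tt -> is_Ctest C S -> is_Ctest C S' ->
    [\/ local_portion C S \subset local_portion C S',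
        local_portion C S' \subset local_portion C S
      | [disjoint local_portion C S & local_portion C S']].
Proof.
move=> _ _ _ H2 Hhalf C HC S S' HS HS' HcS HcS'.
case: (boolP (local_portion C S \subset local_portion C S')) => h1;
  first by constructor 1.
case: (boolP (local_portion C S' \subset local_portion C S)) => h2;
  first by constructor 2.
case: (boolP [disjoint local_portion C S & local_portion C S']) => h3;
  first by constructor 3.
exfalso.
have /imsetP [i0 _ EC] := HC.
have notF : forall X, X \in Tt -> is_Ctest C X -> X \in Tt :\: F.
  move=> X HX /andP [/set0Pn [x Hx] /set0Pn [y Hy]].
  rewrite !inE HX andbT; apply/negP => XF.
  move: Hx Hy; rewrite !inE => /andP [xX xC] /andP [yX yC].
  rewrite EC in xC yC.
  have /unsepP := in_class_unsep xC yC.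
  by move/(_ X XF); rewrite xX (negbTE yX).
have HSn := notF S HS HcS; have HS'n := notF S' HS' HcS'.
have Hb := H2 S S' HSn HS'n.
set G := S |: (S' |: F) in Hb.
have FG : F \subset G by apply/subsetP => X XF; rewrite !inE XF !orbT.
have SG : S \in G by rewrite !inE eqxx.
have S'G : S' \in G by rewrite !inE eqxx orbT.
have [b bL bL'] := subsetPn h1.
have [c cL' cL] := subsetPn h2.
have [a aL] : exists a, a \in local_portion C S :&: local_portion C S'.
  by apply/set0Pn; rewrite setI_eq0.
have [d dC dn] : exists2 d, d \in C & d \notin local_portion C S :|: local_portion C S'.
  case: (boolP (C \subset local_portion C S :|: local_portion C S')) => hs.
    have := subset_leq_card hs; rewrite cardsU.
    have := Hhalf C HC S HS HcS; have := Hhalf C HC S' HS' HcS'.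
    have : 0 < #|local_portion C S :&: local_portion C S'|.
      by rewrite card_gt0; apply/set0Pn; exists a.
    have := subset_leq_card (subsetIl (local_portion C S) (local_portion C S')).
    set p := #|_ :&: _|; set q := #|local_portion C S|; set r := #|local_portion C S'|; set m := #|C|; move=> h h0 ha hb hc; exfalso; move: h h0 ha hb hc; clearbody p q r m; clear; lia.
  by have [d ? ?] := subsetPn hs; exists d.
move: aL bL bL' cL cL' dn; rewrite /local_portion !inE.
move=> /and3P [/andP [aS aC] aS' _] /andP [bS bC].
rewrite bC andbT => bS'.
move=> cS /andP [cS' cC]; rewrite cC andbT in cS.
rewrite dC !andbT negb_or => /andP [dS dS'].
have ab : class_of G a != class_of G b by apply: (class_neq S'G); rewrite aS' (negbTE bS').
have ac : class_of G a != class_of G c by apply: (class_neq SG); rewrite aS (negbTE cS).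
have ad : class_of G a != class_of G d by apply: (class_neq SG); rewrite aS (negbTE dS).
have bc : class_of G b != class_of G c by apply: (class_neq SG); rewrite bS (negbTE cS).
have bd : class_of G b != class_of G d by apply: (class_neq SG); rewrite bS (negbTE dS).
have cd : class_of G c != class_of G d by apply: (class_neq S'G); rewrite cS' (negbTE dS').
pose phi (D : {set 'I_n}) := class_of F (odflt i0 [pick x in D]).
have phiE : forall y, phi (class_of G y) = class_of F y.
  move=> y; rewrite /phi; case: pickP => [x Hx|H] /=.
    symmetry; apply: class_eq; apply: (unsep_sub FG).
    by have := in_class_unsep (class_self G y) Hx.
  by have := H y; rewrite class_self.
pose A := classes G.
pose P := [set D | phi D == C].
have cardA := cardsID P A.
have h4 : 4 <= #|A :&: P|.
  pose s := [:: class_of G a; class_of G b; class_of G c; class_of G d].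
  have us : uniq s.
    rewrite /s /= !inE !negb_or.
    by rewrite ab ac ad bc bd cd.
  have -> : 4 = size s by []. rewrite -(card_uniqP us); apply: subset_leq_card; apply/subsetP => D.
  have inC : forall x, x \in C -> class_of G x \in A :&: P.
    move=> x xC; rewrite !inE phiE; apply/andP; split.
      by apply/imsetP; exists x.
    by rewrite EC; apply/eqP; apply: class_eq; rewrite EC in xC;
      apply: in_class_unsep xC (class_self F i0).
  move=> HD; suff [x xC ->] : exists2 x, x \in C & D = class_of G x by exact: inC.
  move: HD; rewrite /s !inE => /or4P [] /eqP ->;
    by [exists a | exists b | exists c | exists d].
have hr : #|classes F :\ C| <= #|A :\: P|.
  apply: leq_trans (leq_imset_card phi _); apply: subset_leq_card.
  apply/subsetP => E; rewrite !inE => /andP [EnC /imsetP [y _ Ey]]; subst E.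
  apply/imsetP; exists (class_of G y); last by rewrite phiE.
  by rewrite !inE phiE EnC /=; apply/imsetP; exists y.
have := cardsD1 C (classes F); rewrite HC /= => hF.
move: Hb cardA h4 hr hF; rewrite /num_classes /A.
set x1 := #|classes G|; set x2 := #|classes F|; set x3 := #|_ :&: P|; set x4 := #|_ :\: P|; set x5 := #|classes F :\ C|.
clearbody x1 x2 x3 x4 x5; clear; lia.
Qed.
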